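(* There exists a constant $b>0$ such that for every $n,m\in\mathbb{N}^+$ and every sequence of samples $(x_1,y_1),\dots,(x_m,y_m)$ with $x_j\in\mathcal{B}^n$, $y_j\in\mathcal{B}$, which is consistent with some function $\mathcal{B}^n\to\mathcal{B}$ (i.e. $x_j=x_k$ implies $y_j=y_k$), there exists a Boolean circuit on $n$ inputs of size at most $bm$ that outputs $y_j$ on input $x_j$ for every $j=1,\dots,m$.
   Context: Let $\mathcal{B}=\{0,1\}$. A Boolean circuit on $n$ inputs is a DAG with a unique sink (output) whose sources are labelled by input indices in $\{1,\dots,n\}$ and whose other vertices (gates) are labelled AND, OR (two incoming edges) or NOT (one incoming edge); it computes a function $\mathcal{B}^n\to\mathcal{B}$ in the usual way; its size is its number of vertices. *)

(* Defs.v *)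
From mathcomp Require Import all_boot.
Set Implicit Arguments. Unset Strict Implicit. Unset Printing Implicit Defensive.

(* Boolean circuits on n inputs, represented as DAGs given in topological
   order (straight-line programs).  Vertex k (0-based) is a source labelled
   by an input index, or a gate whose incoming edges come from vertices with
   smaller index.  The sink (output) is the last vertex. *)
Inductive gate (n : nat) : Type :=
  | GInput of 'I_n
  | GNot of nat
  | GAnd of nat & nat
  | GOr of nat & nat.

Definition circuit (n : nat) := seq (gate n).

Definition preds n (g : gate n) : seq nat :=
  match g with
  | GInput _ => [::]
  | GNot i => [:: i]
  | GAnd i j => [:: i; j]
  | GOr i j => [:: i; j]
  end.

(* well-formed: nonempty, edges go from earlier vertices (acyclic), and the
   last vertex is the unique sink (every other vertex has an outgoing edge). *)
Definition wf_circuit n (c : circuit n) : bool :=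
  [&& 0 < size c,
      all (fun k => all (fun i => i < k) (preds (nth (GNot n 0) c k))) (iota 0 (size c))
    & all (fun i => has (fun k => i \in preds (nth (GNot n 0) c k)) (iota 0 (size c)))
          (iota 0 (size c).-1)].

Definition eval_gate n (x : n.-tuple bool) (vals : seq bool) (g : gate n) : bool :=
  match g with
  | GInput i => tnth x i
  | GNot i => ~~ nth false vals i
  | GAnd i j => nth false vals i && nth false vals j
  | GOr i j => nth false vals i || nth false vals j
  end.

Definition eval_all n (c : circuit n) (x : n.-tuple bool) : seq bool :=
  foldl (fun vals g => rcons vals (eval_gate x vals g)) [::] c.

Definition eval_circuit n (c : circuit n) (x : n.-tuple bool) : bool :=
  last false (eval_all c x).

Definition circuit_size n (c : circuit n) : nat := size c.

(* Main.v *)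
Require Import Defs.
From mathcomp Require Import all_boot zify.
Set Implicit Arguments. Unset Strict Implicit. Unset Printing Implicit Defensive.

Section C.
Variable n : nat.
Let d : gate n := GNot n 0.

Definition shiftg (k : nat) (g : gate n) : gate n :=
  match g with
  | GInput i => GInput i
  | GNot i => GNot n (i + k)
  | GAnd i j => GAnd n (i + k) (j + k)
  | GOr i j => GOr n (i + k) (j + k)
  end.

Definition step (x : n.-tuple bool) := fun vals (g : gate n) => rcons vals (eval_gate x vals g).

Lemma eval_shift x vals w g :
  eval_gate x (vals ++ w) (shiftg (size vals) g) = eval_gate x w g.
Proof.
case: g => [i|i|i j|i j] //=; rewrite !nth_cat ?ltnNge ?leq_addl //= ?addnK //.
Qed.

Lemma foldl_shift x vals w b :
  foldl (step x) (vals ++ w) (map (shiftg (size vals)) b) = vals ++ foldl (step x) w b.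
Proof.
elim: b w => [|g b IH] w //=.
by rewrite /step eval_shift rcons_cat IH.
Qed.

Lemma size_foldl x w b : size (foldl (step x) w b) = size w + size b.
Proof. elim: b w => [|g b IH] w /=; first by rewrite addn0. by rewrite IH size_rcons addSnnS. Qed.

Lemma preds_shift k g : preds (shiftg k g) = map (addn^~ k) (preds g).
Proof. by case: g. Qed.

Definition acyc (c : circuit n) := forall k, k < size c -> forall i, i \in preds (nth d c k) -> i < k.
Definition sinkp (c : circuit n) := forall i, i < (size c).-1 -> exists2 k, k < size c & i \in preds (nth d c k).

Lemma wfE c : wf_circuit c -> [/\ 0 < size c, acyc c & sinkp c].
Proof.
case/and3P=> s0 /allP A /allP B; split=> //.
  move=> k kc i ip; have := A k; rewrite mem_iota add0n => /(_ kc) /allP; exact.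
move=> i ic; have := B i; rewrite mem_iota add0n ic => /(_ isT) /hasP[k].
by rewrite mem_iota add0n => kc ip; exists k.
Qed.

Lemma wfI c : 0 < size c -> acyc c -> sinkp c -> wf_circuit c.
Proof.
move=> s0 A B; apply/and3P; split=> //.
  apply/allP=> k; rewrite mem_iota add0n => kc; apply/allP => i; exact: A.
apply/allP=> i; rewrite mem_iota add0n => ic; apply/hasP.
by have [k kc ip] := B i ic; exists k; rewrite ?mem_iota ?add0n.
Qed.

Definition comb (G : nat -> nat -> gate n) (a b : circuit n) :=
  a ++ (map (shiftg (size a)) b ++ [:: G (size a).-1 (size a + size b).-1]).

Lemma size_eval_all (c : circuit n) x : size (eval_all c x) = size c.
Proof. by rewrite /eval_all (size_foldl x). Qed.

Lemma comb_eval G o (a b : circuit n) x :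
 (forall vals i j, eval_gate x vals (G i j) = o (nth false vals i) (nth false vals j)) ->
 0 < size a -> 0 < size b ->
 eval_circuit (comb G a b) x = o (eval_circuit a x) (eval_circuit b x).
Proof.
move=> HG a0 b0.
have sa := size_eval_all a x; have sb := size_eval_all b x.
have E : foldl (step x) (eval_all a x) (map (shiftg (size a)) b) = eval_all a x ++ eval_all b x.
  by have := foldl_shift x (eval_all a x) [::] b; rewrite cats0 sa.
rewrite /eval_circuit /eval_all /comb !foldl_cat.
rewrite -/(@eval_all n a x) E /= last_rcons HG.
rewrite !nth_cat sa -/(@eval_all n b x) -!(nth_last false) sa sb.
have -> : (size a).-1 < size a by lia.
have -> : (size a + size b).-1 < size a = false by lia.
congr o; congr nth; lia.
Qed.

Lemma size_comb G (a b : circuit n) : size (comb G a b) = size a + size b + 1.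
Proof. rewrite /comb !size_cat size_map /=; lia. Qed.

Lemma comb_wf G (a b : circuit n) :
 (forall i j, preds (G i j) = [:: i; j]) ->
 wf_circuit a -> wf_circuit b -> wf_circuit (comb G a b).
Proof.
move=> HG /wfE[a0 Aa Ba] /wfE[b0 Ab Bb].
have Nc : forall k, nth d (comb G a b) k =
   if k < size a then nth d a k else if k - size a < size b
   then shiftg (size a) (nth d b (k - size a)) else nth d [:: G (size a).-1 (size a + size b).-1] (k - size a - size b).
  move=> k; rewrite /comb nth_cat nth_cat size_map.
  case: ifP => // _; case: ifP => // kb.
  by rewrite (nth_map d).
apply: wfI; first by rewrite size_comb; lia.
- move=> k; rewrite size_comb Nc => kc i.
  case: ifP => [ka|ka]; first exact: Aa.
  case: ifP => [kb|kb].
    rewrite preds_shift => /mapP[i' ip ->].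
    have := Ab _ kb _ ip; lia.
  have -> : k - size a - size b = 0 by lia.
  rewrite /= HG !inE => /orP[] /eqP ->; lia.
- move=> i ic; rewrite size_comb addn1 /= in ic.
  have Hlast : i = (size a).-1 \/ i = (size a + size b).-1 ->
     exists2 k, k < size (comb G a b) & i \in preds (nth d (comb G a b) k).
    move=> Hi; exists (size a + size b); first by rewrite size_comb; lia.
    rewrite Nc; have -> : (size a + size b < size a) = false by lia.
    have -> : (size a + size b - size a < size b) = false by lia.
    have -> : size a + size b - size a - size b = 0 by lia.
    rewrite /= HG !inE.
    by case: Hi => ->; rewrite eqxx ?orbT.
  case: (ltnP i (size a).-1) => [ia|ai].
    have [k ka ip] := Ba i ia; exists k; first by rewrite size_comb; lia.
    by rewrite Nc ka.
  case: (eqVneq i (size a).-1) => [Ei|ina]; first by apply: Hlast; left.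
  case: (eqVneq i (size a + size b).-1) => [Ei|inb]; first by apply: Hlast; right.
  have [k kb ip] := Bb (i - size a) ltac:(lia).
  exists (k + size a); first by rewrite size_comb; lia.
  rewrite Nc; have -> : (k + size a < size a) = false by lia.
  rewrite addnK kb preds_shift.
  have -> : i = (i - size a) + size a by lia.
  exact: map_f.
Qed.
End C.

Definition good n (c : circuit n) (f : n.-tuple bool -> bool) :=
  wf_circuit c /\ forall x, eval_circuit c x = f x.

Lemma good_lit n (i : 'I_n) : good [:: GInput i] (fun x => tnth x i).
Proof. by split. Qed.

Lemma good_nlit n (i : 'I_n) : good [:: GInput i; GNot n 0] (fun x => ~~ tnth x i).
Proof. by split. Qed.

Lemma good_and n (a b : circuit n) f g : good a f -> good b g ->
  good (comb (GAnd n) a b) (fun x => f x && g x).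
Proof.
move=> [wa ea] [wb eb]; split; first exact: comb_wf.
move=> x; have [+ _ _] := wfE wa; have [+ _ _] := wfE wb => b0 a0.
by rewrite (comb_eval (o := andb)) // ea eb.
Qed.

Lemma good_or n (a b : circuit n) f g : good a f -> good b g ->
  good (comb (GOr n) a b) (fun x => f x || g x).
Proof.
move=> [wa ea] [wb eb]; split; first exact: comb_wf.
move=> x; have [+ _ _] := wfE wa; have [+ _ _] := wfE wb => b0 a0.
by rewrite (comb_eval (o := orb)) // ea eb.
Qed.

Lemma good_const n (i0 : 'I_n) (v : bool) : exists c : circuit n, good c (fun _ => v) /\ size c = 4.
Proof.
case: v.
  exists (comb (GOr n) [:: GInput i0] [:: GInput i0; GNot n 0]); split => //.
  have [w e] := good_or (good_lit i0) (good_nlit i0); split => // x.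
  by rewrite e orbN.
exists (comb (GAnd n) [:: GInput i0] [:: GInput i0; GNot n 0]); split => //.
have [w e] := good_and (good_lit i0) (good_nlit i0); split => // x.
by rewrite e andbN.
Qed.

Lemma dtree n (i0 : 'I_n) (s : seq (n.-tuple bool * bool)) :
  0 < size s -> (forall p q, p \in s -> q \in s -> p.1 = q.1 -> p.2 = q.2) ->
  exists c : circuit n, [/\ wf_circuit c, size c <= 10 * size s - 6
     & forall p, p \in s -> eval_circuit c p.1 = p.2].
Proof.
have [k] := ubnP (size s); elim: k s => // k IH s sk s0 cons.
case: s sk s0 cons => // p0 s' sk _ cons.
case: (boolP (all (fun p => p.2 == p0.2) (p0 :: s'))) => [/allP Hall|].
  have [c [[w e] sc]] := good_const i0 p0.2.
  exists c; split => //; first by rewrite sc /=; lia.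
  by move=> p ps; rewrite e; apply/esym/eqP/Hall.
case/allPn => q qs qne.
have p0s : p0 \in p0 :: s' by rewrite inE eqxx.
have xne : p0.1 != q.1.
  apply/eqP => E; move: qne; by rewrite (cons _ _ p0s qs E) eqxx.
have [i Hi] : exists i, tnth p0.1 i != tnth q.1 i.
  case: (boolP [exists i, tnth p0.1 i != tnth q.1 i]) => [/existsP//|/existsPn H].
  by case/eqP: xne; apply: eq_from_tnth => i; apply/eqP; move: (H i); rewrite negbK.
set s1 := [seq p <- p0 :: s' | tnth p.1 i].
set s0 := [seq p <- p0 :: s' | ~~ tnth p.1 i].
have sz : size s1 + size s0 = size (p0 :: s').
  by rewrite !size_filter count_predC.
have n1 : 0 < size s1.
  case: (boolP (tnth p0.1 i)) => h.
    by rewrite /s1 /= h.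
  by rewrite -has_predT; apply/hasP; exists q => //; rewrite mem_filter qs andbT; move: Hi; rewrite (negbTE h); case: (tnth q.1 i).
have n0 : 0 < size s0.
  case: (boolP (tnth p0.1 i)) => h.
    by rewrite -has_predT; apply/hasP; exists q => //; rewrite mem_filter qs andbT; move: Hi; rewrite h; case: (tnth q.1 i).
  by rewrite /s0 /= h.
have [c1 [w1 z1 e1]] : exists c : circuit n, [/\ wf_circuit c, size c <= 10 * size s1 - 6
     & forall p, p \in s1 -> eval_circuit c p.1 = p.2].
  apply: IH => //; first by lia.
  by move=> p q'; rewrite !mem_filter => /andP[_ ?] /andP[_ ?]; apply: cons.
have [c0 [w0 z0 e0]] : exists c : circuit n, [/\ wf_circuit c, size c <= 10 * size s0 - 6
     & forall p, p \in s0 -> eval_circuit c p.1 = p.2].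
  apply: IH => //; first by lia.
  by move=> p q'; rewrite !mem_filter => /andP[_ ?] /andP[_ ?]; apply: cons.
have [w e] := good_or (good_and (good_lit i) (conj w1 (fun x => erefl (eval_circuit c1 x))))
                     (good_and (good_nlit i) (conj w0 (fun x => erefl (eval_circuit c0 x)))).
eexists; split; first exact: w.
  rewrite !size_comb; move: sz => /= sz; lia.
move=> p ps; rewrite e; case: (boolP (tnth p.1 i)) => h /=.
  by rewrite orbF; apply: e1; rewrite mem_filter h.
by apply: e0; rewrite mem_filter h.
Qed.

Theorem mainTheorem19 :
  exists b : nat, 0 < b /\
    forall (n m : nat), 0 < n -> 0 < m ->
    forall (x : 'I_m -> n.-tuple bool) (y : 'I_m -> bool),
      (forall j k : 'I_m, x j = x k -> y j = y k) ->
      exists c : circuit n,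
        [/\ wf_circuit c,
            circuit_size c <= b * m
          & forall j : 'I_m, eval_circuit c (x j) = y j].
Proof.
exists 10; split => // n m n0 m0 x y cons.
pose i0 : 'I_n := Ordinal n0.
pose s := [seq (x j, y j) | j <- enum 'I_m].
have ss : size s = m by rewrite size_map size_enum_ord.
have H : forall p q, p \in s -> q \in s -> p.1 = q.1 -> p.2 = q.2.
  move=> p q /mapP[j _ ->] /mapP[k _ ->] /=; exact: cons.
have s0 : 0 < size s by rewrite ss.
have [c [w z e]] := @dtree n i0 s s0 H.
exists c; split => //; first by rewrite /circuit_size; move: z; rewrite ss; lia.
by move=> j; apply: (e (x j, y j)); apply: map_f; rewrite mem_enum.
Qed.
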